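(* Let $N$ and $L$ be positive integers. A perfect star path of length $N$ with constant edge length $L$ exists if and only if $L$ and $N$ are coprime, $2\le L<N/2$, and $N\ge 5$.
   Context: A path of length $N$ is a vector $p=(p_0,\dots,p_{N-1})$ whose entries are the integers $0,\dots,N-1$ in some order; indices are cyclic, $p_N=p_0$. The path differences are $d_n=p_{n+1}-p_n$, and the steps are $s_n=d_n$ if $|d_n|<N/2$; $s_n=N/2$ if $|d_n|=N/2$; $s_n=d_n-N$ if $d_n>N/2$; $s_n=d_n+N$ if $d_n<-N/2$. The edge lengths are $|s_n|$. A star path is a path with $|s_n|\neq 1$ for all $n$. A perfect star path with constant edge length $L$ is a star path with $|s_n|=L$ for all $n\in\{0,\dots,N-1\}$. *)

(* Defs.v *)
From mathcomp Require Import all_boot all_order all_algebra all_fingroup.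
Set Implicit Arguments. Unset Strict Implicit. Unset Printing Implicit Defensive.
Import Order.TTheory GRing.Theory Num.Theory.
Local Open Scope ring_scope.

(* A path of length N: a permutation p of {0,...,N-1}, p_n = val (p n).
   Indices are cyclic: p_{n+1} is p (ordS n). *)

Definition step (N : nat) (d : int) : int :=
  if ((2 * `|d|) < N)%N then d
  else if ((2 * `|d|)%N == N) then (N %/ 2)%:Z
  else if 0 < d then d - N%:Z else d + N%:Z.

Definition pdiff (N : nat) (p : {perm 'I_N}) (n : 'I_N) : int :=
  (nat_of_ord (p (ordS n)))%:Z - (nat_of_ord (p n))%:Z.

Definition edge_len (N : nat) (p : {perm 'I_N}) (n : 'I_N) : nat :=
  `|step N (pdiff p n)|%N.

Definition star_path (N : nat) (p : {perm 'I_N}) : Prop :=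
  forall n : 'I_N, edge_len p n <> 1%N.

Definition perfect_star_path (N : nat) (p : {perm 'I_N}) (L : nat) : Prop :=
  star_path p /\ forall n : 'I_N, edge_len p n = L.

(* Main.v *)
Require Import Defs.
From mathcomp Require Import all_boot all_order all_algebra all_fingroup zify ring.
Set Implicit Arguments. Unset Strict Implicit. Unset Printing Implicit Defensive.
Import Order.TTheory GRing.Theory Num.Theory.
Local Open Scope ring_scope.

Lemma step_cases N d :
  (step N d - d = 0 \/ step N d - d = N%:Z \/ step N d - d = - N%:Z)%R.
Proof.
rewrite /step; case: ifP => h1; first lia.
case: ifP => h2; first lia.
case: ifP => h3; lia.
Qed.

Lemma step_dvd N d : (N%:Z %| step N d - d)%Z.
Proof.
case: (step_cases N d) => [->|[->|->]]; rewrite ?dvdz0 ?dvdzz //.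
by rewrite rpredN dvdzz.
Qed.

Lemma step_bound N d : (`|d| < N)%N -> (2 * `|step N d| <= N)%N.
Proof.
move=> h; rewrite /step; case: ifP => h1; first lia.
case: ifP => h2; first lia.
case: ifP => h3; lia.
Qed.

Lemma pdiff_bound N (p : {perm 'I_N}) n : (`|pdiff p n| < N)%N.
Proof.
rewrite /pdiff; have := ltn_ord (p (ordS n)); have := ltn_ord (p n); lia.
Qed.

Lemma necessary N L (p : {perm 'I_N}) : (0 < N)%N -> (0 < L)%N ->
  perfect_star_path p L ->
  [/\ coprime L N, (2 <= L)%N, (2 * L < N)%N & (5 <= N)%N].
Proof.
move=> hN0 hL [hs he].
case: N hN0 p hs he => [|N] // _ p hs he.
have L2 : (2 <= L)%N by have := hs ord0; rewrite he; lia.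
have hN : (0 < N)%N.
  case: N p hs he => // p hs he; have := he ord0.
  rewrite /edge_len /pdiff !(ord1 (p _)) /= /step /=; lia.
set g := gcdn L N.+1.
have gd : forall n : 'I_N.+1, (g%:Z %| pdiff p n)%Z.
  move=> n; have -> : pdiff p n = step N.+1 (pdiff p n) - (step N.+1 (pdiff p n) - pdiff p n) by ring.
  apply: rpredB.
    by rewrite dvdzE /= -/(edge_len p n) he /g dvdn_gcdl.
  by apply: dvdz_trans (step_dvd _ _); rewrite dvdzE /= /g dvdn_gcdr.
have ind : forall k, (k < N.+1)%N -> (g%:Z %| (p (inord k))%:Z - (p ord0)%:Z)%Z.
  elim=> [|k IH] hk; first by rewrite (_ : inord 0 = ord0) ?subrr ?dvdz0 //; apply: val_inj; rewrite /= inordK.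
  have -> : (inord k.+1 : 'I_N.+1) = ordS (inord k).
    by apply: val_inj; rewrite /= !inordK ?modn_small //; lia.
  have -> : (p (ordS (inord k)))%:Z - (p ord0)%:Z = pdiff p (inord k) + ((p (inord k))%:Z - (p ord0)%:Z) by rewrite /pdiff; ring.
  by apply: rpredD; [apply: gd | apply: IH; lia].
have h1 := ind ((p^-1)%g (inord 1)) (ltn_ord _).
have h0 := ind ((p^-1)%g ord0) (ltn_ord _).
rewrite !inord_val !permKV in h1 h0.
have : (g%:Z %| 1%R)%Z.
  have -> : (1 = ((inord 1 : 'I_N.+1))%:Z - (p ord0)%:Z - (((ord0 : 'I_N.+1))%:Z - (p ord0)%:Z))%R.
    rewrite inordK //=; ring.
  exact: rpredB.
rewrite dvdzE /= dvdn1 => /eqP cop.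
have cL : coprime L N.+1 by rewrite /coprime -/g cop.
have b := step_bound (pdiff_bound p ord0).
have := he ord0; rewrite /edge_len => E; rewrite E in b.
have ne : (2 * L != N.+1)%N.
  apply/eqP=> e; move: cL; rewrite -e /coprime.
  have -> : gcdn L (2 * L) = L by apply/gcdn_idPl; exact: dvdn_mull.
  lia.
split=> //; lia.
Qed.

Lemma mul_inj N L (hN : (0 < N)%N) (cL : coprime L N) :
  injective (fun n : 'I_N => Ordinal (ltn_pmod (n * L) hN)).
Proof.
move=> a b /(congr1 val) /= e; apply: val_inj => /=.
wlog le : a b e / (a <= b)%N.
  move=> H; case: (leqP a b) => h; first exact: H.
  symmetry; apply: H; first by rewrite e.
  exact: ltnW.
symmetry in e; move/eqP: e; rewrite eqn_mod_dvd; last by rewrite leq_mul2r le orbT.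
rewrite -mulnBl Gauss_dvdl; last by rewrite coprime_sym.
have := ltn_ord a; have := ltn_ord b => hb ha d.
case: (posnP (b - a)) => [z|pz]; first lia.
have := dvdn_leq pz d; lia.
Qed.

Lemma sufficient N L (hN : (0 < N)%N) :
  [/\ coprime L N, (2 <= L)%N, (2 * L < N)%N & (5 <= N)%N] ->
  exists p : {perm 'I_N}, perfect_star_path p L.
Proof.
case=> cL L2 LN _.
exists (perm (@mul_inj N L hN cL)).
suff E : forall n, edge_len (perm (@mul_inj N L hN cL)) n = L.
  by split => // n; rewrite E; lia.
move=> n; rewrite /edge_len /pdiff !permE /=.
have -> : ((n.+1 %% N) * L = n * L + L %[mod N])%N by rewrite modnMml mulSnr.
have := ltn_pmod (n * L) hN.
have La : (L < N)%N by lia.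
rewrite -modnDml; set a := ((n * L) %% N)%N => ha.
case: (ltnP (a + L) N) => h.
  rewrite modn_small //; rewrite /step.
  have -> : (a + L)%:Z - a%:Z = L%:Z by rewrite PoszD; ring.
  by rewrite ifT //.
have -> : ((a + L) %% N = a + L - N)%N.
  rewrite -{1}(subnK h) modnDr modn_small //; lia.
rewrite /step.
have -> : (a + L - N)%N%:Z - a%:Z = L%:Z - N%:Z by lia.
rewrite ifF; last by lia.
rewrite ifF; last by lia.
rewrite ifF; last by lia.
have -> : L%:Z - N%:Z + N%:Z = L%:Z by ring.
by [].
Qed.

Theorem mainTheorem8 (N L : nat) (hN : (0 < N)%N) (hL : (0 < L)%N) :
  (exists p : {perm 'I_N}, perfect_star_path p L) <->
  [/\ coprime L N, (2 <= L)%N, (2 * L < N)%N & (5 <= N)%N].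
Proof.
split; first by case=> p; apply: necessary.
exact: sufficient.
Qed.
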